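(* Let $T$ be a finite rooted tree with a self-loop at the root and $|T|\ge2$, let $v$ be a vertex of $T$ (possibly the root) and $T(v)$ the subtree of descendants of $v$. For $t\in\mathbb N$ let $N_t$ be the number of visits to $T(v)$ during $t$ steps of simple random walk on $T$. Then \[ E_v[N_t]\le |T(v)|\Big[\frac{t+3}{|T|-1}+48|T|\Big]. \]
   Context: Degrees count the self-loop twice; simple random walk moves from a vertex along a uniformly chosen edge-end; $E_v$ is expectation for the walk started at $v$. The descendants of $v$ are the vertices farther from the root than $v$ whose unique path to the root contains $v$; $T(v)$ consists of $v$ and its descendants. $|\cdot|$ is the number of vertices. *)

(* Defs.v *)
From mathcomp Require Import all_boot all_order all_algebra.
Set Implicit Arguments. Unset Strict Implicit. Unset Printing Implicit Defensive.
Import Order.TTheory GRing.Theory Num.Theory.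
Local Open Scope ring_scope.

(* A finite rooted tree on the vertex type V is encoded by its parent map
   [p : V -> V] and root [r]: the root is its own parent and every vertex
   reaches the root by iterating [p].  The edges are {x, p x} for x <> r,
   plus (by the standing convention of the paper) a self-loop at the root. *)
Definition rooted_tree (V : finType) (p : V -> V) (r : V) : Prop :=
  p r = r /\ forall x : V, fconnect p x r.

Definition in_subtree (V : finType) (p : V -> V) (v u : V) : bool :=
  fconnect p u v.

(* Number of edge-ends at x leading to y: tree edges contribute 1, the
   self-loop at the root contributes 2 (both of its ends). *)
Definition adj (V : finType) (p : V -> V) (r : V) (x y : V) : nat :=
  ((x != y) && ((p x == y) || (p y == x))) + ((x == r) && (y == r)).*2.

Definition deg (V : finType) (p : V -> V) (r : V) (x : V) : nat :=
  \sum_(y : V) adj p r x y.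

Definition srw (R : fieldType) (V : finType) (p : V -> V) (r : V) (x y : V) : R :=
  (adj p r x y)%:R / (deg p r x)%:R.

Definition path_prob (R : fieldType) (V : finType) (p : V -> V) (r : V)
  (t : nat) (w : {ffun 'I_t.+1 -> V}) : R :=
  \prod_(i < t) srw R p r (w (widen_ord (leqnSn t) i)) (w (lift ord0 i)).

Definition visits (V : finType) (p : V -> V) (v : V) (t : nat)
  (w : {ffun 'I_t.+1 -> V}) : nat :=
  #|[set i : 'I_t.+1 | in_subtree p v (w i)]|.

Definition expected_visits (R : fieldType) (V : finType) (p : V -> V) (r v : V)
  (t : nat) : R :=
  \sum_(w : {ffun 'I_t.+1 -> V} | w ord0 == v)
     path_prob R p r w * (visits p v w)%:R.

(* Main.v *)
Require Import Defs.
From mathcomp Require Import all_boot all_order all_algebra.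
From mathcomp Require Import ring lra zify.
Import Order.TTheory GRing.Theory Num.Theory.
Set Implicit Arguments. Unset Strict Implicit. Unset Printing Implicit Defensive.

Section Tree.
Variables (V : finType) (p : V -> V) (r : V).
Hypothesis hT : rooted_tree p r.

Lemma fconP {a b} : fconnect p a b -> exists m, iter m p a = b.
Proof. move=> h; exists (findex p a b); exact: iter_findex. Qed.

Lemma iter_r m : iter m p r = r.
Proof. by apply: iter_fix; case: hT. Qed.

Lemma iter_mul m q x : iter m p x = x -> iter (m * q) p x = x.
Proof.
move=> h; elim: q => [|q IH]; first by rewrite muln0.
by rewrite mulnS iterD IH h.
Qed.

Lemma cycle_r m x : iter m.+1 p x = x -> x = r.
Proof.
move=> h; case: hT => _ /(_ x) /fconP [m' hm'].
have := @iter_mul _ m' _ h; rewrite mulSnr iterD hm' iter_r => <-.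
by [].
Qed.

Lemma pr_ne x : x != r -> p x != x.
Proof. by move=> xr; apply/eqP => h; move/eqP: xr; apply; apply: (@cycle_r 0). Qed.

Lemma p_eq x : (p x == x) = (x == r).
Proof.
apply/idP/idP => [/eqP h|/eqP ->]; first by apply/eqP; apply: (@cycle_r 0).
by case: hT => ->.
Qed.

Lemma fcon_step y z : fconnect p y z = (y == z) || fconnect p (p y) z.
Proof.
apply/idP/idP.
  move=> /fconP [[|m]]; first by move=> /= ->; rewrite eqxx.
  by rewrite iterSr => <-; rewrite fconnect_iter orbT.
case/orP => [/eqP ->|h]; first exact: connect0.
exact: connect_trans (fconnect1 _ _) h.
Qed.

Lemma child_not_anc x y : p y = x -> y != x -> ~~ fconnect p x y.
Proof.
move=> pyx yx; apply/negP => /fconP [m hm].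
have : iter m.+1 p x = x by rewrite iterS hm.
move=> /cycle_r xr; move: hm; rewrite xr iter_r => ry.
by move: yx; rewrite -ry xr eqxx.
Qed.

Lemma child_count x u :
  (\sum_(y : V) ((p y == x) && (y != x) && fconnect p u y) = ((fconnect p u x) && (u != x)) :> nat)%N.
Proof.
case: (boolP ((fconnect p u x) && (u != x))) => [/andP [hux ux]|hn].
  have ex : exists m, iter m p u == x by case: (fconP hux) => m hm; exists m; apply/eqP.
  case: (ex_minnP ex) => m /eqP hm hmin.
  have m0 : (0 < m)%N by case: m hm hmin => // /= hm; move: ux; rewrite hm eqxx.
  set y := iter m.-1 p u.
  have pyx : p y = x by rewrite /y -iterS prednK.
  have yx : y != x.
    apply/negP => /eqP hy; have := hmin _ (introT eqP hy).
    by rewrite -ltnS prednK // ltnn.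
  rewrite (bigD1 y) //= pyx eqxx yx /y fconnect_iter -/y.
  rewrite big1 ?addn0 // => y' y'y; apply/eqP; rewrite eqb0.
  apply/negP => /andP [/andP [/eqP py'x y'x] huy'].
  move: y'y => /negP; apply.
  have [m1 h1] := fconP huy'.
  have [m2 h2] : exists m2, iter m2 p u = y by exists m.-1.
  have key : forall a b m1 m2, p a = x -> a != x -> p b = x -> b != x ->
     iter m1 p u = a -> iter m2 p u = b -> (m1 <= m2)%N -> a = b.
    move=> a b n1 n2 pa ax pb bx ha hb le12.
    have : iter (n2 - n1) p a = b by rewrite -ha -iterD subnK.
    case: (n2 - n1) => [//|d].
    rewrite iterSr pa => hd.
    have : iter d.+1 p x = x by rewrite iterS hd pb.
    move=> /cycle_r xr; move: hd; rewrite xr iter_r => rb.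
    by move: bx; rewrite -rb xr eqxx.
  case: (leqP m1 m2) => hle.
    apply/eqP; exact: key py'x y'x pyx yx h1 h2 hle.
  apply/eqP; symmetry; exact: (key y y' m2 m1 pyx yx py'x y'x h2 h1 (ltnW hle)).
rewrite big1 // => y _; apply/eqP; rewrite eqb0.
apply/negP => /andP [/andP [/eqP pyx yx] huy].
move: hn; rewrite negb_and => /orP [/negP hn|].
  exfalso; apply: hn; apply: connect_trans huy _; rewrite -pyx; exact: fconnect1.
rewrite negbK => /eqP ux; exfalso; move: huy; rewrite ux; apply/negP.
exact: child_not_anc.
Qed.


Lemma adj_dec x y : adj p r x y =
  (((y == p x) && (x != r)) + ((p y == x) && (y != x)) + ((x == r) && (y == r)).*2)%N.
Proof.
rewrite /adj; case: (eqVneq x y) => [<-|xy].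
  by rewrite /= andbF [x == p x]eq_sym p_eq andbN andbb.
have xr2 : ((x == r) && (y == r)) = false.
  by apply/negP => /andP [/eqP xr /eqP yr]; move: xy; rewrite xr yr eqxx.
rewrite xr2 /= addn0 andbT [y == p x]eq_sym.
case: (eqVneq (p x) y) => [pxy|pxy] /=.
  have xr : x != r by apply/negP => /eqP xr; move: xy; rewrite -pxy xr; case: hT => -> ; rewrite eqxx.
  have : (p y == x) = false.
    apply/negP => /eqP pyx; move/negP: xr; apply; apply/eqP.
    by apply: (@cycle_r 1); rewrite /= pxy.
  by move=> ->; rewrite xr.
by rewrite add0n addn0.
Qed.

Definition ch x : nat := (\sum_(y : V) ((p y == x) && (y != x)))%N.

Lemma deg_eq x : deg p r x = (1 + (x == r) + ch x)%N.
Proof.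
rewrite /deg (eq_bigr _ (fun y _ => adj_dec x y)) !big_split /=.
have e1 : (\sum_(y : V) ((y == p x) && (x != r) : nat) = (x != r))%N.
  by rewrite (bigD1 (p x)) //= eqxx big1 ?addn0 // => y /negbTE ->.
have e3 : (\sum_(y : V) (((x == r) && (y == r)).*2) = (x == r).*2)%N.
  rewrite (bigD1 r) //= eqxx andbT big1 ?addn0 // => y /negbTE ->.
  by rewrite andbF.
rewrite e1 e3 /ch; case: (x == r) => /=; rewrite ?add0n ?addn0 /=; lia.
Qed.

Lemma sum_ne_r : (\sum_(y : V) ((y != r) : nat) = #|V|.-1)%N.
Proof.
rewrite (bigD1 r) //= eqxx add0n -(cardC1 r) -sum1_card.
by apply: eq_big => // y /= ->.
Qed.

Lemma sum_ch : (\sum_(x : V) ch x = #|V|.-1)%N.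
Proof.
rewrite /ch exchange_big /= -sum_ne_r; apply: eq_bigr => y _.
rewrite (bigD1 (p y)) //= eqxx /= big1 ?addn0.
  by rewrite eq_sym p_eq.
by move=> x /negbTE; rewrite eq_sym => ->.
Qed.

Lemma sum_deg : (\sum_(x : V) deg p r x = 2 * #|V|)%N.
Proof.
rewrite (eq_bigr _ (fun x _ => deg_eq x)) !big_split /= sum_ch sum1_card.
rewrite (bigD1 r) //= eqxx big1 ?addn0; last by move=> x /negbTE ->.
have : (0 < #|V|)%N by apply/card_gt0P; exists r.
case: #|V| => // n _ /=; lia.
Qed.

Variable v : V.
Definition inA u : bool := in_subtree p v u.

Lemma inA_p y : inA (p y) -> inA y.
Proof. by rewrite /inA /in_subtree => h; apply: connect_trans (fconnect1 _ _) h. Qed.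

Lemma sum_degA :
  (\sum_(u : V) (inA u : nat) * deg p r u <= 2 * \sum_(u : V) (inA u : nat))%N.
Proof.
rewrite (eq_bigr _ (fun x _ => congr1 (muln _) (deg_eq x))).
rewrite (eq_bigr (fun u => (inA u : nat) + (inA u) * (u == r) + (inA u) * ch u)%N); last first.
  by move=> u _; rewrite !mulnDr muln1.
rewrite !big_split /= mul2n -addnn -addnA leq_add2l.
have -> : (\sum_u (inA u : nat) * ch u = \sum_y ((inA (p y)) && (y != p y) : nat))%N.
  rewrite /ch (eq_bigr (fun u => \sum_y ((inA u) && ((p y == u) && (y != u)) : nat))%N); last first.
    by move=> u _; case: (inA u); rewrite /= ?mul1n ?mul0n // big1.
  rewrite exchange_big /=; apply: eq_bigr => y _.
  rewrite (bigD1 (p y)) //= eqxx /= big1 ?addn0 //.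
  by move=> x /negbTE; rewrite [p y == x]eq_sym => ->; rewrite andbF.
rewrite [X in (_ <= X)%N](bigD1 r) //=.
rewrite (bigD1 r) //= eqxx muln1 big1 ?addn0; last first.
  by move=> i /negbTE ->; rewrite muln0.
rewrite leq_add2l [X in (_ <= X)%N]big_mkcond /=; apply: leq_sum => y _.
rewrite eq_sym p_eq.
case: (y != r) => /=; rewrite ?andbT ?andbF //.
by case h: (inA (p y)) => //=; rewrite (@inA_p y h).
Qed.
End Tree.

Local Open Scope ring_scope.

Section Paths.
Variables (R : realFieldType) (V : finType).

Definition fcons n (x : V) (g : {ffun 'I_n -> V}) : {ffun 'I_n.+1 -> V} :=
  [ffun i => if unlift ord0 i is Some j then g j else x].

Lemma fcons0 n x (g : {ffun 'I_n -> V}) : fcons x g ord0 = x.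
Proof. by rewrite ffunE unlift_none. Qed.

Lemma fconsS n x (g : {ffun 'I_n -> V}) j : fcons x g (lift ord0 j) = g j.
Proof. by rewrite ffunE liftK. Qed.

Lemma big_fcons n (F : {ffun 'I_n.+1 -> V} -> R) :
  \sum_(w : {ffun 'I_n.+1 -> V}) F w =
  \sum_(x : V) \sum_(g : {ffun 'I_n -> V}) F (fcons x g).
Proof.
rewrite pair_bigA /=.
rewrite (reindex (fun pq : V * {ffun 'I_n -> V} => fcons pq.1 pq.2)) //.
apply: onW_bij.
exists (fun w : {ffun 'I_n.+1 -> V} => (w ord0, [ffun j => w (lift ord0 j)])).
  move=> [x g] /=; congr pair; first exact: fcons0.
  by apply/ffunP => j; rewrite ffunE fconsS.
move=> w /=; apply/ffunP => i; rewrite ffunE.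
by case: (unliftP ord0 i) => [j ->|->]; rewrite ?liftK ?unlift_none // ffunE.
Qed.

Lemma big_fcons_eq n (F : {ffun 'I_n.+1 -> V} -> R) x :
  \sum_(w : {ffun 'I_n.+1 -> V} | w ord0 == x) F w =
  \sum_(g : {ffun 'I_n -> V}) F (fcons x g).
Proof.
rewrite big_mkcond big_fcons (bigD1 x) //= [X in _ + X]big1 ?addr0.
  by apply: eq_bigr => g _; rewrite fcons0 eqxx.
by move=> y yx; apply: big1 => g _; rewrite fcons0 (negbTE yx).
Qed.

Lemma big_ffun0 (F : {ffun 'I_0 -> V} -> R) (g0 : {ffun 'I_0 -> V}) :
  \sum_(g : {ffun 'I_0 -> V}) F g = F g0.
Proof.
rewrite (big_pred1 g0) // => g /=; apply/esym/eqP/ffunP => -[].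
by [].
Qed.


Variables (p : V -> V) (r : V).
Hypothesis hsum : forall x, \sum_(y : V) srw R p r x y = 1.

Lemma pp_cons t x (g : {ffun 'I_t.+1 -> V}) :
  path_prob R p r (fcons x g) = srw R p r x (g ord0) * path_prob R p r g.
Proof.
rewrite /path_prob big_ord_recl; congr (_ * _).
  have -> : widen_ord (leqnSn t.+1) ord0 = ord0 :> 'I_t.+2 by apply: val_inj.
  by rewrite fcons0 fconsS.
apply: eq_bigr => i _.
have -> : widen_ord (leqnSn t.+1) (lift ord0 i) = lift ord0 (widen_ord (leqnSn t) i).
  by apply: val_inj.
by rewrite !fconsS.
Qed.

Lemma pp_0 x (g : {ffun 'I_0 -> V}) : path_prob R p r (fcons x g) = 1.
Proof. by rewrite /path_prob big_ord0. Qed.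

Lemma card_setE n (P : pred 'I_n) : #|[set i | P i]| = (\sum_(i < n) (P i : nat))%N.
Proof.
rewrite -sum1_card big_mkcond /=; apply: eq_bigr => i _; rewrite inE.
by case: (P i).
Qed.

Lemma visits_cons v n x (g : {ffun 'I_n.+1 -> V}) :
  visits p v (fcons x g) = (in_subtree p v x + visits p v g)%N.
Proof.
rewrite /visits !card_setE big_ord_recl fcons0; congr addn.
by apply: eq_bigr => i _; rewrite fconsS.
Qed.

Lemma visits_0 v x (g : {ffun 'I_0 -> V}) : visits p v (fcons x g) = in_subtree p v x.
Proof. by rewrite /visits card_setE big_ord_recl big_ord0 fcons0 addn0. Qed.

Lemma split_first t x (H : {ffun 'I_t.+1 -> V} -> R) :
  \sum_(g : {ffun 'I_t.+1 -> V}) srw R p r x (g ord0) * H g =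
  \sum_(z : V) srw R p r x z * \sum_(g : {ffun 'I_t.+1 -> V} | g ord0 == z) H g.
Proof.
rewrite (partition_big (fun g : {ffun 'I_t.+1 -> V} => g ord0) predT) //=.
apply: eq_bigr => z _; rewrite big_distrr /=.
by apply: eq_bigr => g /eqP ->.
Qed.

Lemma mass t y : \sum_(g : {ffun 'I_t.+1 -> V} | g ord0 == y) path_prob R p r g = 1.
Proof.
elim: t y => [|t IH] y.
  by rewrite big_fcons_eq (big_ffun0 _ [ffun i => y]) pp_0.
rewrite big_fcons_eq (eq_bigr _ (fun g _ => pp_cons y g)) split_first.
rewrite -(hsum y); apply: eq_bigr => z _; by rewrite IH mulr1.
Qed.

Definition EV v x t : R :=
  \sum_(w : {ffun 'I_t.+1 -> V} | w ord0 == x) path_prob R p r w * (visits p v w)%:R.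

Lemma EV_eq v t : expected_visits R p r v t = EV v v t.
Proof. by []. Qed.

Lemma ev_0 v x : EV v x 0 = (in_subtree p v x)%:R.
Proof.
rewrite /EV big_fcons_eq (big_ffun0 _ [ffun i => x]).
by rewrite pp_0 visits_0 mul1r.
Qed.

Lemma ev_S v x t : EV v x t.+1 =
  (in_subtree p v x)%:R + \sum_(z : V) srw R p r x z * EV v z t.
Proof.
rewrite /EV big_fcons_eq.
rewrite (eq_bigr (fun g : {ffun 'I_t.+1 -> V} => srw R p r x (g ord0) *
   (path_prob R p r g * (in_subtree p v x)%:R + path_prob R p r g * (visits p v g)%:R))); last first.
  by move=> g _; rewrite pp_cons visits_cons natrD; ring.
rewrite (eq_bigr (fun g : {ffun 'I_t.+1 -> V} => srw R p r x (g ord0) * (path_prob R p r g * (in_subtree p v x)%:R)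
   + srw R p r x (g ord0) * (path_prob R p r g * (visits p v g)%:R))); last first.
  by move=> g _; rewrite mulrDr.
rewrite big_split /= !split_first; congr (_ + _).
rewrite -[X in _ = X]mulr1 -(hsum x) big_distrr /=; apply: eq_bigr => z _.
by rewrite -big_distrl /= mass mul1r mulrC.
Qed.

End Paths.

Section Pot.
Variables (R : realFieldType) (V : finType) (p : V -> V) (r : V).
Hypothesis hT : rooted_tree p r.
Variables (v : V) (c : R).

Lemma deg_pos x : (0 < deg p r x)%N.
Proof. by rewrite (deg_eq hT). Qed.

Lemma hsum x : \sum_(y : V) srw R p r x y = 1.
Proof.
rewrite /srw -big_distrl /= -natr_sum -/(deg p r x) mulfV //.
by rewrite pnatr_eq0 -lt0n deg_pos.
Qed.

Definition w u : R := (deg p r u)%:R * (c - (inA p v u)%:R).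
Definition g z : R := \sum_(u : V) (fconnect p u z)%:R * w u.
Definition f x : R := \sum_(z : V) ((z != r) && fconnect p x z)%:R * g z.

Lemma f_child x y : p y = x -> y != x -> f y = f x + g y.
Proof.
move=> pyx yx.
have yr : y != r.
  apply/negP => /eqP yr; move: yx; rewrite -pyx yr; case: hT => ->; by rewrite eqxx.
have e : forall z, ((z != r) && fconnect p y z)%:R * g z =
   (z == y)%:R * g z + ((z != r) && fconnect p x z)%:R * g z :> R.
  move=> z; rewrite (fcon_step p) pyx; case: (eqVneq z y) => [->|zy].
    rewrite yr /= (negbTE (child_not_anc hT pyx yx)). by rewrite mul0r addr0.
  by rewrite /= mul0r add0r.
rewrite /f (eq_bigr _ (fun z _ => e z)) big_split /= addrC; congr (_ + _).
rewrite (bigD1 y) //= eqxx mul1r big1 ?addr0 // => z /negbTE ->.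
by rewrite mul0r.
Qed.

Lemma sum_ch_g x : \sum_(y : V) ((p y == x) && (y != x))%:R * g y = g x - w x.
Proof.
rewrite /g.
rewrite (eq_bigr (fun y => \sum_u (((p y == x) && (y != x)) && fconnect p u y)%:R * w u)); last first.
  move=> y _; rewrite big_distrr /=; apply: eq_bigr => u _.
  by case: ((p y == x) && (y != x)); case: (fconnect p u y); rewrite /= ?mul1r ?mul0r.
rewrite exchange_big /=.
rewrite (eq_bigr (fun u => ((fconnect p u x) && (u != x))%:R * w u)); last first.
  by move=> u _; rewrite -big_distrl /= -natr_sum (child_count hT).
apply/eqP; rewrite eq_sym subr_eq; apply/eqP.
rewrite (bigD1 x) //= connect0 mul1r [X in _ = X + _](bigD1 x) //= eqxx andbF mul0r add0r.
rewrite addrC; congr (_ + _); apply: eq_bigr => u ux; by rewrite ux andbT.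
Qed.

Lemma drift x : \sum_(y : V) (adj p r x y)%:R * (f y - f x) =
  \sum_(y : V) ((p y == x) && (y != x))%:R * g y - (x != r)%:R * g x.
Proof.
rewrite (eq_bigr (fun y => ((y == p x) && (x != r))%:R * (f y - f x) +
    ((p y == x) && (y != x))%:R * g y +
    (((x == r) && (y == r)).*2)%:R * (f y - f x))); last first.
  move=> y _; rewrite (adj_dec hT) !natrD !mulrDl; congr (_ + _ + _).
  case: (eqVneq (p y) x) => [pyx|]; case: (eqVneq y x) => [yx|yx] /=; rewrite ?mul0r //.
  by rewrite !mul1r (f_child pyx yx) addrAC subrr add0r.
rewrite !big_split /=.
rewrite [X in X + _ + _](bigD1 (p x)) //= eqxx /= big1 ?addr0; last first.
  by move=> y /negbTE ->; rewrite mul0r.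
rewrite [X in _ + X = _]big1 ?addr0; last first.
  move=> y _; case: (eqVneq x r) => [->|]; case: (eqVneq y r) => [->|] /=; rewrite ?subrr ?mulr0 // => *; by rewrite mulr0n mul0r.
case: (eqVneq x r) => [xr|xr] /=; first by rewrite !mul0r add0r subr0.
rewrite !mul1r.
have px : p x != x by apply: (pr_ne hT).
have xpx : x != p x by rewrite eq_sym.
rewrite (f_child (erefl (p x)) xpx); ring.
Qed.


Lemma drift_ge x : 0 <= \sum_(u : V) w u ->
  - w x <= \sum_(y : V) (adj p r x y)%:R * (f y - f x).
Proof.
move=> hw; rewrite drift sum_ch_g; case: (eqVneq x r) => [->|xr] /=.
  have -> : g r = \sum_u w u.
    rewrite /g; apply: eq_bigr => u _; case: hT => _ /(_ u) ->; by rewrite mul1r.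
  rewrite mul0r subr0; lra.
by rewrite mul1r addrAC subrr add0r.
Qed.

Lemma Pf x : 0 <= \sum_(u : V) w u ->
  (inA p v x)%:R - c <= \sum_(y : V) srw R p r x y * f y - f x.
Proof.
move=> hw.
have dpos : 0 < (deg p r x)%:R :> R by rewrite ltr0n deg_pos.
have e : \sum_(y : V) srw R p r x y * f y - f x =
    ((deg p r x)%:R)^-1 * \sum_(y : V) (adj p r x y)%:R * (f y - f x).
  transitivity (\sum_(y : V) srw R p r x y * f y - (\sum_(y : V) srw R p r x y) * f x).
    by rewrite hsum mul1r.
  rewrite big_distrl /= -sumrB big_distrr /=.
  by apply: eq_bigr => y _; rewrite /srw; ring.
rewrite e.
have e2 : (inA p v x)%:R - c = ((deg p r x)%:R)^-1 * (- w x).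
  rewrite /w mulrN mulrA mulVf ?mul1r; last by rewrite gt_eqF.
  by rewrite opprB.
rewrite e2; apply: ler_wpM2l; first by rewrite invr_ge0 ltW.
exact: drift_ge.
Qed.

Definition W : R := \sum_(u : V) `|w u|.

Lemma g_bound z : `|g z| <= W.
Proof.
rewrite /g /W; apply: le_trans (ler_norm_sum _ _ _) _; apply: ler_sum => u _.
by case: (fconnect p u z); rewrite ?mul1r ?mul0r ?normr0 ?normr_ge0.
Qed.

Lemma f_bound x : `|f x| <= #|V|%:R * W.
Proof.
rewrite /f; apply: le_trans (ler_norm_sum _ _ _) _.
apply: le_trans (_ : \sum_(z : V) W <= _).
  apply: ler_sum => z _; case: ((z != r) && fconnect p x z); rewrite ?mul1r ?mul0r ?normr0 ?g_bound //.
  by apply: le_trans (g_bound z); rewrite normr_ge0.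
by rewrite sumr_const mulr_natl.
Qed.


Lemma sumw : \sum_(u : V) w u =
  c * (2 * #|V|)%:R - (\sum_(u : V) (inA p v u * deg p r u))%:R.
Proof.
rewrite -(sum_deg hT) !natr_sum big_distrr -sumrB /=.
by apply: eq_bigr => u _; rewrite /w natrM; case: (inA p v u); rewrite /=; ring.
Qed.

Lemma Wle : 0 <= c ->
  W <= c * (2 * #|V|)%:R + (\sum_(u : V) (inA p v u * deg p r u))%:R.
Proof.
move=> hc; rewrite -(sum_deg hT) !natr_sum big_distrr -big_split /=.
apply: ler_sum => u _; rewrite /w normrM natrM ger0_norm ?ler0n //.
have d0 : 0 <= (deg p r u)%:R :> R by rewrite ler0n.
have hb : `|c - (inA p v u)%:R| <= c + (inA p v u)%:R.
  case: (inA p v u) => /=; last by rewrite subr0 addr0 ger0_norm.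
  rewrite ler_norml; apply/andP; split; lra.
rewrite [c * _]mulrC [_ * (deg p r u)%:R]mulrC -mulrDr; exact: ler_wpM2l.
Qed.

Lemma srw_ge0 x y : 0 <= srw R p r x y.
Proof. by rewrite /srw divr_ge0 ?ler0n. Qed.

Lemma lyap (B : R) : 0 <= c -> (forall x, `|f x| <= B) ->
  (forall x, (in_subtree p v x)%:R - c <= \sum_(y : V) srw R p r x y * f y - f x) ->
  forall t x, EV R p r v x t <= (t.+1)%:R * c + B - f x + 1.
Proof.
move=> hc hB hP; elim=> [|t IH] x.
  rewrite ev_0.
  have h1 : (in_subtree p v x)%:R <= 1 :> R by case: in_subtree; rewrite ?ler01.
  have h2 : f x <= B by apply: le_trans (ler_norm _) (hB x).
  have h3 : 0 <= c * 1%:R by rewrite mulr1.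
  lra.
rewrite (ev_S hsum).
set K := (t.+1)%:R * c + B + 1.
have h1 : \sum_(z : V) srw R p r x z * EV R p r v z t <=
          \sum_(z : V) srw R p r x z * (K - f z).
  apply: ler_sum => z _; apply: ler_wpM2l; first exact: srw_ge0.
  rewrite /K; move: (IH z); lra.
have h2 : \sum_(z : V) srw R p r x z * (K - f z) = K - \sum_(z : V) srw R p r x z * f z.
  transitivity (K * \sum_(z : V) srw R p r x z - \sum_(z : V) srw R p r x z * f z).
    by rewrite big_distrr -sumrB /=; apply: eq_bigr => z _; ring.
  by rewrite hsum mulr1.
have h3 := hP x.
have e : (t.+2)%:R * c = (t.+1)%:R * c + c by rewrite -[t.+2]addn1 natrD mulrDl mul1r.
rewrite e; rewrite h2 in h1; rewrite /K in h1; lra.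
Qed.

End Pot.

Theorem corollary5p5 (R : realFieldType) (V : finType) (p : V -> V) (r : V)
  (hT : rooted_tree p r) (hcard : (2 <= #|V|)%N) (v : V) (t : nat) :
  expected_visits R p r v t <=
    (#|[set u : V | in_subtree p v u]|)%:R *
      (((t + 3)%:R / (#|V|%:R - 1)) + 48 * (#|V|)%:R).
Proof.
set n := #|V|.
set K := (\sum_(u : V) (inA p v u : nat))%N.
have hK : #|[set u : V | in_subtree p v u]| = K.
  rewrite -sum1_card big_mkcond /=; apply: eq_bigr => u _; rewrite inE.
  by rewrite /inA; case: (in_subtree p v u).
rewrite hK.
have K1 : (1 <= K)%N.
  rewrite /K (bigD1 v) //= /inA /in_subtree connect0; lia.
have hSR : (\sum_(u : V) (inA p v u * deg p r u))%N%:R <= 2 * K%:R :> R.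
  by rewrite -natrM ler_nat; exact: sum_degA.
have K1R : 1 <= K%:R :> R by rewrite ler1n.
have n2 : 2%:R <= n%:R :> R by rewrite ler_nat.
set d := n%:R - 1 : R.
have d1 : 1 <= d by rewrite /d; lra.
have d0 : d != 0 by apply/negP => /eqP d0; move: d1; rewrite d0; lra.
set c := K%:R / d.
have hcd : c * d = K%:R by rewrite /c mulfVK.
have c0 : 0 <= c by rewrite /c divr_ge0 //; lra.
have cK : c <= K%:R.
  have : c * 1 <= c * d by apply: ler_wpM2l.
  lra.
have hn : n%:R = d + 1 :> R by rewrite /d; ring.
have hw : 0 <= \sum_(u : V) w p r v c u.
  rewrite sumw // natrM -/n; rewrite hn.
  have : c * (2 * (d + 1)) = 2 * K%:R + 2 * c by rewrite -hcd; ring.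
  lra.
have hW : W p r v c <= 4 * K%:R + 2 * c.
  apply: le_trans (Wle hT v c0) _; rewrite natrM -/n hn.
  have : c * (2 * (d + 1)) = 2 * K%:R + 2 * c by rewrite -hcd; ring.
  lra.
have hB : forall x, `|f p r v c x| <= n%:R * W p r v c := f_bound p r v c.
have hL := lyap hT c0 hB (fun x => Pf hT x hw) t v.
rewrite (EV_eq R p r v t).
apply: le_trans hL _.
have hfv : - f p r v c v <= n%:R * W p r v c.
  by apply: le_trans (hB v); rewrite -normrN ler_norm.
have n0 : 0 <= n%:R :> R by lra.
have hnW : n%:R * W p r v c <= n%:R * (4 * K%:R + 2 * c) by apply: ler_wpM2l.
have e1 : (t.+1)%:R = t%:R + 1 :> R by rewrite -addn1 natrD.
have e3 : (t + 3)%:R = t%:R + 3 :> R by rewrite natrD.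
have e4 : K%:R * ((t%:R + 3) / d) = (t%:R + 3) * c by rewrite /c; field.
rewrite e1 e3 mulrDr e4.
have t0 : 0 <= t%:R :> R by rewrite ler0n.
have hnK : 1 <= n%:R * K%:R :> R by nra.
have hnc : n%:R * c <= n%:R * K%:R by apply: ler_wpM2l.
nra.
Qed.
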